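(* Let $L\ge1$, $M\ge2$, $\lambda>0$, $\tilde d_{\min}>0$, let ${\bm\kappa}_k=(\Phi_k,\Psi_k,\Theta_k)^T$ and ${\bm\kappa}_{k'}=(\Phi_{k'},\Psi_{k'},\Theta_{k'})^T$ be unit vectors in $\mathbb{R}^3$ with $\Delta\Phi_{k,k'}:=\Phi_k-\Phi_{k'}\neq0$, and let ${\bf q}_1,\dots,{\bf q}_L\in\mathbb{R}^3$ be arbitrary. For real antenna offsets $b_{l,m}$ ($1\le l\le L$, $1\le m\le M$) define $$\xi=\frac{1}{L^2M^2}\Big|\sum_{l=1}^L e^{\,\mathrm{j}\frac{2\pi}{\lambda}({\bm\kappa}_k-{\bm\kappa}_{k'})^T{\bf q}_l}\sum_{m=1}^M e^{\,\mathrm{j}\frac{2\pi}{\lambda}b_{l,m}\Delta\Phi_{k,k'}}\Big|^2.$$ Let $\tilde\nu_{\min}=\lceil M\tilde d_{\min}|\Delta\Phi_{k,k'}|/\lambda-1\rceil$, let $\zeta^\star=\tilde\nu_{\min}/M$ if $\mathrm{mod}(\tilde\nu_{\min}+1,M)\neq0$ and $\zeta^\star=(\tilde\nu_{\min}+1)/M$ otherwise, and set $$b_{l,m}=(m-1)\frac{(\zeta^\star+1/M)\lambda}{|\Delta\Phi_{k,k'}|}\quad\text{for all } l,m.$$ Then $\sum_{m=1}^M e^{\mathrm{j}\frac{2\pi}{\lambda}b_{l,m}\Delta\Phi_{k,k'}}=0$ for every $l$, hence $\xi=0$ regardless of ${\bf q}_1,\dots,{\bf q}_L$; moreover $b_{l,1}=0$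 and $|b_{l,m}-b_{l,m'}|\ge\tilde d_{\min}$ for all $l$ and all $m\neq m'$.
   Context: $\mathrm{j}$ is the imaginary unit, $\lceil\cdot\rceil$ the ceiling, and $\mathrm{mod}(a,b)$ the remainder of integer $a$ divided by $b$. Each of $L$ UAVs carries a linear movable-antenna array of $M$ antennas at offsets $b_{l,m}$ along the $x$-axis from the UAV's reference point ${\bf q}_l$; $\tilde d_{\min}$ is the minimum inter-antenna spacing (mutual-coupling avoidance). $\xi$ is the squared correlation coefficient of two users' far-field channels. *)

(* Defs.v *)
From Stdlib Require Import Reals ZArith Zfloor.
From Coquelicot Require Import Coquelicot.
Open Scope R_scope.

Definition vec3 := (R * R * R)%type.
Definition dot3 (u v : vec3) : R :=
  let '(u1, u2, u3) := u in let '(v1, v2, v3) := v in u1*v1 + u2*v2 + u3*v3.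
Definition norm3 (u : vec3) : R := sqrt (dot3 u u).
Definition sub3 (u v : vec3) : vec3 :=
  let '(u1, u2, u3) := u in let '(v1, v2, v3) := v in (u1 - v1, u2 - v2, u3 - v3).
Definition Phi (u : vec3) : R := fst (fst u).

Definition cexpj (t : R) : C := (cos t, sin t).

Definition inner_sum (M : nat) (lam dPhi : R) (b : nat -> nat -> R) (l : nat) : C :=
  sum_n_m (fun m => cexpj (2 * PI / lam * b l m * dPhi)) 1 M.

Definition xi (L M : nat) (lam : R) (kk kk' : vec3) (q : nat -> vec3)
  (b : nat -> nat -> R) : R :=
  / (INR L ^ 2 * INR M ^ 2) *
  Cmod (sum_n_m (fun l => Cmult (cexpj (2 * PI / lam * dot3 (sub3 kk kk') (q l)))
                                 (inner_sum M lam (Phi kk - Phi kk') b l)) 1 L) ^ 2.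

Definition nu_min (M : nat) (lam dmin dPhi : R) : Z :=
  Zceil (INR M * dmin * Rabs dPhi / lam - 1).

Definition zeta_star (M : nat) (lam dmin dPhi : R) : R :=
  let nu := nu_min M lam dmin dPhi in
  if negb (Z.eqb (Z.modulo (nu + 1) (Z.of_nat M)) 0)
  then IZR nu / INR M
  else (IZR nu + 1) / INR M.

(* b_{l,m} = (m-1) (zeta* + 1/M) lam / |dPhi|, for all l (m is 1-based) *)
Definition b_opt (M : nat) (lam dmin dPhi : R) (l m : nat) : R :=
  (INR m - 1) * ((zeta_star M lam dmin dPhi + / INR M) * lam / Rabs dPhi).

(* Main.v *)
Require Import Defs.
From Stdlib Require Import Reals ZArith Zfloor Lra Lia.
From Coquelicot Require Import Coquelicot.
Open Scope R_scope.

Lemma geo (th : R) (n : nat) :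
  Cmult (sum_n_m (fun m => cexpj ((INR m - 1) * th)) 1 n) (Cminus (cexpj th) 1)
  = Cminus (cexpj (INR n * th)) 1.
Proof.
induction n as [|n IH].
- rewrite sum_n_m_zero; [|lia]. simpl. unfold cexpj, Cminus, Cmult, Cplus, Copp, zero; simpl.
  rewrite ?Rmult_0_l, ?cos_0, ?sin_0. f_equal; ring.
- rewrite sum_n_Sm; [|lia]. change plus with Cplus.
  rewrite Cmult_plus_distr_r, IH.
  replace (INR (S n) - 1) with (INR n) by (rewrite S_INR; ring).
  replace (INR (S n) * th) with (INR n * th + th) by (rewrite S_INR; ring).
  unfold cexpj, Cminus, Cmult, Cplus, Copp; simpl.
  rewrite cos_plus, sin_plus. f_equal; ring.
Qed.
Lemma geo0 (th : R) (n : nat) : sin (th/2) <> 0 -> cos (INR n * th) = 1 -> sin (INR n * th) = 0 ->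
  sum_n_m (fun m => cexpj ((INR m - 1) * th)) 1 n = RtoC 0.
Proof.
intros Hs Hc Hsn. pose proof (geo th n) as G.
destruct (sum_n_m (fun m => cexpj ((INR m - 1) * th)) 1 n) as [a b].
unfold cexpj, Cminus, Cmult, Cplus, Copp in G; simpl in G.
rewrite Hc, Hsn in G. injection G; intros E2 E1.
assert (Hc' : cos th - 1 <> 0).
{ replace th with (2 * (th/2)) at 1 by field. rewrite cos_2a_sin.
  intro H. apply Hs. nra. }
assert (E1' : a*(cos th - 1) - b*sin th = 0) by lra. assert (E2' : a*sin th + b*(cos th - 1) = 0) by lra. assert (a * ((cos th - 1)^2 + (sin th)^2) = (cos th - 1) * (a*(cos th - 1) - b*sin th) + sin th * (a*sin th + b*(cos th - 1))) by ring. rewrite E1', E2' in H. rewrite !Rmult_0_r, Rplus_0_r in H.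
assert (a = 0).
{ apply Rmult_integral in H as [H|H]; auto. exfalso. nra. }
subst a. assert (Hb : b * (cos th - 1) = 0) by lra. apply Rmult_integral in Hb as [H1|H1]; [|contradiction]. subst. reflexivity.
Qed.

Lemma trig_int (z : Z) : cos (2*PI*IZR z) = 1 /\ sin (2*PI*IZR z) = 0.
Proof.
destruct (Z_le_gt_dec 0 z) as [H|H].
- rewrite <- (Z2Nat.id z H), <- INR_IZR_INZ.
  replace (2*PI*INR (Z.to_nat z)) with (0 + 2*INR (Z.to_nat z)*PI) by ring.
  rewrite cos_period, sin_period, cos_0, sin_0. auto.
- assert (H' : (0 <= - z)%Z) by lia.
  replace (IZR z) with (- IZR (- z)) by (rewrite opp_IZR; ring).
  rewrite <- (Z2Nat.id (-z) H'), <- INR_IZR_INZ.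
  replace (2*PI* - INR (Z.to_nat (-z))) with (- (0 + 2*INR (Z.to_nat (-z))*PI)) by ring.
  rewrite cos_neg, sin_neg, cos_period, sin_period, cos_0, sin_0. split; ring.
Qed.

Theorem mainTheorem3 (L M : nat) (lam dmin : R) (kk kk' : vec3) (q : nat -> vec3) :
  (1 <= L)%nat -> (2 <= M)%nat -> 0 < lam -> 0 < dmin ->
  norm3 kk = 1 -> norm3 kk' = 1 -> Phi kk - Phi kk' <> 0 ->
  let dPhi := Phi kk - Phi kk' in
  let b := b_opt M lam dmin dPhi in
  (forall l : nat, (1 <= l <= L)%nat -> inner_sum M lam dPhi b l = 0%C) /\
  xi L M lam kk kk' q b = 0 /\
  (forall l : nat, (1 <= l <= L)%nat -> b l 1%nat = 0) /\
  (forall l m m' : nat, (1 <= l <= L)%nat -> (1 <= m <= M)%nat -> (1 <= m' <= M)%nat ->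
     m <> m' -> dmin <= Rabs (b l m - b l m')).
Proof.
intros HL HM Hlam Hd _ _ HdP dPhi b.
assert (HMpos : 0 < INR M) by (apply lt_0_INR; lia).
assert (HMne : INR M <> 0) by lra.
assert (HA : 0 < Rabs dPhi) by (apply Rabs_pos_lt; exact HdP).
set (x := INR M * dmin * Rabs dPhi / lam).
assert (Hx : 0 < x) by (unfold x; apply Rdiv_lt_0_compat; [|lra];
  apply Rmult_lt_0_compat; [apply Rmult_lt_0_compat|]; lra).
set (nu := nu_min M lam dmin dPhi).
assert (Hnu : IZR nu - 1 < x - 1 <= IZR nu) by (apply Zceil_bound).
assert (Hk : exists kZ : Z, (kZ mod Z.of_nat M <> 0)%Z /\ x <= IZR kZ /\
   zeta_star M lam dmin dPhi + / INR M = IZR kZ / INR M).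
{ unfold zeta_star. fold nu.
  destruct (Z.eqb_spec ((nu + 1) mod Z.of_nat M) 0) as [E|E]; simpl.
  - exists (nu + 2)%Z. split; [|split].
    + replace (nu + 2)%Z with ((nu + 1) + 1)%Z by ring.
      rewrite Zplus_mod, E, Z.add_0_l, Zmod_mod, Z.mod_small; lia.
    + rewrite plus_IZR. lra.
    + rewrite plus_IZR. field. auto.
  - exists (nu + 1)%Z. split; [exact E|split].
    + rewrite plus_IZR. lra.
    + rewrite plus_IZR. field. auto. }
destruct Hk as [kZ [Hkm [Hkx Hkz]]].
assert (Hb : forall l m, b l m = (INR m - 1) * (IZR kZ / INR M * lam / Rabs dPhi)).
{ intros l m. unfold b, b_opt. rewrite Hkz. reflexivity. }
assert (Hsg : exists sZ : Z, dPhi = IZR sZ * Rabs dPhi /\ (sZ = 1 \/ sZ = -1)%Z).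
{ destruct (Rcase_abs dPhi) as [N|P].
  - exists (-1)%Z. rewrite Rabs_left by lra. split; [lra|auto].
  - exists 1%Z. rewrite Rabs_right by lra. split; [lra|auto]. }
destruct Hsg as [sZ [HsZ HsZ1]].
set (th := 2 * PI * IZR kZ / INR M * IZR sZ).
assert (Hinner : forall l, inner_sum M lam dPhi b l = RtoC 0).
{ intro l. unfold inner_sum.
  rewrite (sum_n_m_ext _ (fun m => cexpj ((INR m - 1) * th))).
  2:{ intro m. f_equal. rewrite Hb. unfold th. rewrite HsZ at 2. field. lra. }
  apply geo0.
  - intro S0. apply sin_eq_0_0 in S0. destruct S0 as [n Hn].
    unfold th in Hn.
    assert (E : IZR (kZ * sZ) = IZR (n * Z.of_nat M)).
    { rewrite !mult_IZR, <- INR_IZR_INZ.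
      assert (PI > 0) by apply PI_RGT_0.
      apply (Rmult_eq_reg_r (PI / INR M)); [|apply Rgt_not_eq; apply Rdiv_lt_0_compat; lra].
      replace (IZR kZ * IZR sZ * (PI / INR M)) with (2 * PI * IZR kZ / INR M * IZR sZ / 2) by (field; auto).
      rewrite Hn. field. auto. }
    apply eq_IZR in E. apply Hkm.
    destruct HsZ1 as [-> | ->].
    + rewrite Z.mul_1_r in E. rewrite E. apply Z.mod_mul. lia.
    + assert (kZ = - n * Z.of_nat M)%Z as -> by lia. apply Z.mod_mul. lia.
  - replace (INR M * th) with (2 * PI * IZR (kZ * sZ)) by (unfold th; rewrite mult_IZR; field; auto).
    apply trig_int.
  - replace (INR M * th) with (2 * PI * IZR (kZ * sZ)) by (unfold th; rewrite mult_IZR; field; auto).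
    apply trig_int. }
split; [intros; apply Hinner|].
split.
{ unfold xi. rewrite (sum_n_m_ext _ (fun _ => zero)).
  2:{ intro l. rewrite Hinner. unfold zero; simpl. apply injective_projections; simpl; ring. }
  rewrite sum_n_m_const_zero. change (@zero C_AbelianMonoid) with (RtoC 0). rewrite Cmod_0. ring. }
split.
{ intros. rewrite Hb. simpl. ring. }
intros l m m' _ Hm Hm' Hne. rewrite !Hb.
set (s := IZR kZ / INR M * lam / Rabs dPhi).
assert (Hs : dmin <= s).
{ assert (E : s - dmin = (IZR kZ - x) * (lam / (INR M * Rabs dPhi))) by (unfold s, x; field; lra).
  assert (0 <= (IZR kZ - x) * (lam / (INR M * Rabs dPhi))).
  { apply Rmult_le_pos; [lra|]. apply Rlt_le, Rdiv_lt_0_compat; [lra|]. apply Rmult_lt_0_compat; lra. }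
  lra. }
replace ((INR m - 1) * s - (INR m' - 1) * s) with ((INR m - INR m') * s) by ring.
rewrite Rabs_mult, (Rabs_right s) by lra.
assert (1 <= Rabs (INR m - INR m')).
{ destruct (Nat.lt_gt_cases m m') as [[H|H] _]; auto.
  - apply le_INR in H. rewrite S_INR in H. rewrite Rabs_left1; lra.
  - apply le_INR in H. rewrite S_INR in H. rewrite Rabs_right; lra. }
nra.
Qed.
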